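(* The inclusion $K\colon\Delta_0\hookrightarrow\mathbf{Grph}$ is not a saturated class of arities: there exist $\Delta_0$-induced endofunctors of $\mathbf{Grph}$ whose composite is not $\Delta_0$-induced.
   Context: Here $\mathcal V=\mathbf{Set}$. $\mathbb G_1$ is the category freely generated by two parallel arrows $0\rightrightarrows 1$, and $\mathbf{Grph}=[\mathbb G_1^{\mathrm{op}},\mathbf{Set}]$ is the category of directed multigraphs. $\Delta_0$ is the (small, dense) full subcategory of $\mathbf{Grph}$ on the graphs $[n]=(0\to 1\to\cdots\to n)$ for $n\ge 0$. An endofunctor $G$ of $\mathbf{Grph}$ is $\Delta_0$-induced if it is the pointwise left Kan extension along $K$ of its restriction $GK$; $\Delta_0$ is a saturated class of arities if $\Delta_0$-induced endofunctors are closed under composition. *)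

(* Defs.v *)
From mathcomp Require Import all_boot.
Set Implicit Arguments. Unset Strict Implicit. Unset Printing Implicit Defensive.

(** Directed multigraphs = presheaves on G_1 (0 ⇉ 1): a set of vertices,
    a set of edges, and source/target maps. *)
Record graph := Graph {
  vert : Type;
  edge : Type;
  src : edge -> vert;
  tgt : edge -> vert }.

Record ghom (X Y : graph) := GHom {
  hV : vert X -> vert Y;
  hE : edge X -> edge Y;
  hsrc : forall e, src (hE e) = hV (src e);
  htgt : forall e, tgt (hE e) = hV (tgt e) }.

Definition homeq (X Y : graph) (f g : ghom X Y) : Prop :=
  (forall v, hV f v = hV g v) /\ (forall e, hE f e = hE g e).

Definition gid (X : graph) : ghom X X :=
  @GHom X X id id (fun _ => erefl) (fun _ => erefl).

Definition gcomp (X Y Z : graph) (g : ghom Y Z) (f : ghom X Y) : ghom X Z.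
Proof.
refine (@GHom X Z (fun v => hV g (hV f v)) (fun e => hE g (hE f e)) _ _).
- by move=> e; rewrite hsrc hsrc.
- by move=> e; rewrite htgt htgt.
Defined.

Record endofunctor := Endofunctor {
  fobj : graph -> graph;
  fmap : forall X Y : graph, ghom X Y -> ghom (fobj X) (fobj Y);
  fmap_homeq : forall X Y (f g : ghom X Y), homeq f g -> homeq (fmap f) (fmap g);
  fmap_id : forall X, homeq (fmap (gid X)) (gid (fobj X));
  fmap_comp : forall X Y Z (g : ghom Y Z) (f : ghom X Y),
      homeq (fmap (gcomp g f)) (gcomp (fmap g) (fmap f)) }.

Definition fcomp (G F : endofunctor) : endofunctor.
Proof.
refine (@Endofunctor (fun X => fobj G (fobj F X))
          (fun X Y f => fmap G (fmap F f)) _ _ _).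
- by move=> X Y f g H; apply: fmap_homeq; apply: fmap_homeq.
- move=> X; have [H1 H2] := fmap_id G (fobj F X).
  have [K1 K2] := fmap_homeq G (fmap_id F X).
  by split => x /=; rewrite K1 H1 || rewrite K2 H2.
- move=> X Y Z g f; have [H1 H2] := fmap_comp G (fmap F g) (fmap F f).
  have [K1 K2] := fmap_homeq G (fmap_comp F g f).
  by split => x /=; rewrite K1 H1 || rewrite K2 H2.
Defined.

(** The linear graph [n] = (0 -> 1 -> ... -> n): vertices 0..n, edges i : i -> i+1. *)
Definition lin (n : nat) : graph :=
  @Graph 'I_n.+1 'I_n (fun i => widen_ord (leqnSn n) i) (fun i => lift ord0 i).

(** Δ0 is the full subcategory on the [n]; K is the inclusion.
    G is Δ0-induced iff G is the pointwise left Kan extension along K of GK,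
    i.e. for every graph X the cocone (G x : G[n] -> G X) indexed by the
    comma category K/X (objects (n, x : [n] -> X), morphisms f : [m] -> [n]
    with x ∘ f = x') is a colimit cocone in Grph. *)
Definition Delta0_induced (G : endofunctor) : Prop :=
  forall (X Y : graph)
         (c : forall n (x : ghom (lin n) X), ghom (fobj G (lin n)) Y),
    (forall m n (f : ghom (lin m) (lin n)) (x : ghom (lin n) X),
        homeq (c m (gcomp x f)) (gcomp (c n x) (fmap G f))) ->
    exists u : ghom (fobj G X) Y,
      (forall n (x : ghom (lin n) X), homeq (gcomp u (fmap G x)) (c n x)) /\
      (forall u' : ghom (fobj G X) Y,
          (forall n (x : ghom (lin n) X), homeq (gcomp u' (fmap G x)) (c n x)) ->
          homeq u' u).

Definition Delta0_saturated : Prop :=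
  forall F G : endofunctor,
    Delta0_induced F -> Delta0_induced G -> Delta0_induced (fcomp G F).

(* Main.v *)
Require Import Defs.
From mathcomp Require Import all_boot.
From Stdlib Require Import FunctionalExtensionality ProofIrrelevance.
Set Implicit Arguments. Unset Strict Implicit. Unset Printing Implicit Defensive.

Lemma homeq_eq X Y (f g : ghom X Y) : homeq f g -> f = g.
Proof.
case: f g => fV fE fs ft [gV gE gs gt] [/= HV HE].
have eV : fV = gV by apply: functional_extensionality.
have eE : fE = gE by apply: functional_extensionality.
subst gV gE. by rewrite (proof_irrelevance _ fs gs) (proof_irrelevance _ ft gt).
Qed.

Lemma I0_empty (i : 'I_0) : False.
Proof. by case: i. Qed.

Definition sym (X : graph) : graph :=
  @Graph (vert X) (edge X + edge X)
    (fun s => match s with inl e => src e | inr e => tgt e end)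
    (fun s => match s with inl e => tgt e | inr e => src e end).

Definition sym_map X Y (f : ghom X Y) : ghom (sym X) (sym Y).
Proof.
refine (@GHom (sym X) (sym Y) (hV f)
  (fun s => match s with inl e => inl (hE f e) | inr e => inr (hE f e) end) _ _);
  by case=> e /=; rewrite ?hsrc ?htgt.
Defined.

Definition Fsym : endofunctor.
Proof.
refine (@Endofunctor sym sym_map _ _ _).
- move=> X Y f g [H1 H2]; split => //= -[e|e] /=; by rewrite H2.
- by move=> X; split => //= -[e|e].
- by move=> X Y Z g f; split => //= -[e|e].
Defined.

Definition path2 (Y : graph) := {p : edge Y * edge Y | tgt p.1 = src p.2}.

Definition P2 (Y : graph) : graph :=
  @Graph (path2 Y) Empty_set (fun e => match e with end) (fun e => match e with end).

Definition p2map X Y (f : ghom X Y) (p : path2 X) : path2 Y.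
Proof.
exists (hE f (sval p).1, hE f (sval p).2).
by rewrite /= htgt hsrc (proj2_sig p).
Defined.

Lemma path2_eq Y (p q : path2 Y) : sval p = sval q -> p = q.
Proof.
case: p q => [a pa] [b pb] /= E; subst b.
by rewrite (proof_irrelevance _ pa pb).
Qed.

Definition P2_map X Y (f : ghom X Y) : ghom (P2 X) (P2 Y).
Proof.
refine (@GHom (P2 X) (P2 Y) (p2map f) (fun e => match e with end) _ _); by case.
Defined.

Definition G2 : endofunctor.
Proof.
refine (@Endofunctor P2 P2_map _ _ _).
- move=> X Y f g [_ H2]; split => [p|[]]; apply: path2_eq => /=; by rewrite !H2.
- move=> X; split => [p|[]]; apply: path2_eq => /=; by case: p => [[a b] q].
- move=> X Y Z g f; split => [p|[]]; by apply: path2_eq.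
Defined.

Definition pt (X : graph) (v : vert X) : ghom (lin 0) X :=
  @GHom (lin 0) X (fun _ => v) (fun i => False_rect _ (I0_empty i))
    (fun i => False_ind _ (I0_empty i)) (fun i => False_ind _ (I0_empty i)).

Definition edgemap (X : graph) (e : edge X) : ghom (lin 1) X.
Proof.
refine (@GHom (lin 1) X (fun i : 'I_2 => if val i == 0 then src e else tgt e)
  (fun _ => e) _ _).
- by move=> i; rewrite (ord1 i).
- by move=> i; rewrite (ord1 i).
Defined.

Definition pathmap (X : graph) (e1 e2 : edge X) (p : tgt e1 = src e2) : ghom (lin 2) X.
Proof.
refine (@GHom (lin 2) X
  (fun i : 'I_3 => match val i with 0 => src e1 | 1 => tgt e1 | _ => tgt e2 end)
  (fun i : 'I_2 => if val i == 0 then e1 else e2) _ _).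
- by case=> [[|[|m]] Hm] //=.
- by case=> [[|[|m]] Hm] //=.
Defined.

Lemma comp_pt X Y (x : ghom X Y) v : gcomp x (pt v) = pt (hV x v).
Proof. apply: homeq_eq; split => //= i; exfalso; exact: I0_empty i. Qed.

Lemma comp_edgemap X Y (x : ghom X Y) e : gcomp x (edgemap e) = edgemap (hE x e).
Proof. apply: homeq_eq; split => /= [i|//]; case: ifP => _; by rewrite ?hsrc ?htgt. Qed.

Lemma comp_pathmap X Y (x : ghom X Y) e1 e2 (p : tgt e1 = src e2)
  (q : tgt (hE x e1) = src (hE x e2)) : gcomp x (pathmap p) = pathmap q.
Proof.
apply: homeq_eq; split => /= i.
- case: i => [[|[|m]] Hm] /=; by rewrite ?hsrc ?htgt.
- by case: ifP.
Qed.

Lemma Fsym_induced : Delta0_induced Fsym.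
Proof.
move=> X Y c Hc.
have Vf : forall n (x : ghom (lin n) X) i,
    hV (c 0 (pt (hV x i))) ord0 = hV (c n x) i.
  move=> n x i; rewrite -comp_pt; have [H _] := Hc _ _ (pt i) x; by rewrite H.
have Efl : forall n (x : ghom (lin n) X) j,
    hE (c 1 (edgemap (hE x j))) (inl ord0) = hE (c n x) (inl j).
  move=> n x j; rewrite -comp_edgemap; have [_ H] := Hc _ _ (edgemap j) x; by rewrite H.
have Efr : forall n (x : ghom (lin n) X) j,
    hE (c 1 (edgemap (hE x j))) (inr ord0) = hE (c n x) (inr j).
  move=> n x j; rewrite -comp_edgemap; have [_ H] := Hc _ _ (edgemap j) x; by rewrite H.
pose uV (v : vert X) := hV (c 0 (pt v)) ord0.
pose uE (s : edge X + edge X) : edge Y :=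
  match s with inl e => hE (c 1 (edgemap e)) (inl ord0)
             | inr e => hE (c 1 (edgemap e)) (inr ord0) end.
have us : forall s, src (uE s) = uV (src (s : edge (fobj Fsym X))).
  case=> e /=; rewrite hsrc /uV.
  - by rewrite -(Vf 1 (edgemap e) (widen_ord (leqnSn 1) ord0)).
  - by rewrite -(Vf 1 (edgemap e) (lift ord0 ord0)).
have ut : forall s, tgt (uE s) = uV (tgt (s : edge (fobj Fsym X))).
  case=> e /=; rewrite htgt /uV.
  - by rewrite -(Vf 1 (edgemap e) (lift ord0 ord0)).
  - by rewrite -(Vf 1 (edgemap e) (widen_ord (leqnSn 1) ord0)).
exists (@GHom (fobj Fsym X) Y uV uE us ut); split.
- move=> n x; split => /= [i|s]; first by rewrite /uV Vf.
  by case: (s : 'I_n + 'I_n) => j /=; rewrite ?Efl ?Efr.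
- move=> u' H; split => /= [v|s]; last case: (s : edge X + edge X) => e.
  + have [H1 _] := H 0 (pt v); exact: (H1 ord0).
  + have [_ H2] := H 1 (edgemap e); exact: (H2 (inl ord0)).
  + have [_ H2] := H 1 (edgemap e); exact: (H2 (inr ord0)).
Qed.

Definition pm Y (p : path2 Y) : ghom (lin 2) Y := pathmap (proj2_sig p).

Definition p0 : path2 (lin 2).
Proof. exists (ord0, ord_max); by apply: val_inj. Defined.

Lemma comp_pm X Y (x : ghom X Y) p : gcomp x (pm p) = pm (p2map x p).
Proof. exact: comp_pathmap. Qed.

Lemma p2map_pm Y (p : path2 Y) : p2map (pm p) p0 = p.
Proof. apply: path2_eq; by case: p => [[a b] q]. Qed.

Lemma G2_induced : Delta0_induced G2.
Proof.
move=> X Y c Hc.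
have Vf : forall n (x : ghom (lin n) X) w,
    hV (c 2 (pm (p2map x w))) p0 = hV (c n x) w.
  move=> n x w; rewrite -comp_pm; have [H _] := Hc _ _ (pm w) x.
  by rewrite H /= p2map_pm.
pose uV (p : path2 X) := hV (c 2 (pm p)) p0.
have us : forall e : edge (fobj G2 X), src (match e with end : edge Y) = uV (src e) by move=> e; case: (e : Empty_set).
have ut : forall e : edge (fobj G2 X), tgt (match e with end : edge Y) = uV (tgt e) by move=> e; case: (e : Empty_set).
exists (@GHom (fobj G2 X) Y uV (fun e => match e with end) us ut); split.
- move=> n x; split => /= [w|[]]; by rewrite /uV Vf.
- move=> u' H; split => /= [p|[]].
  have [H1 _] := H 2 (pm p); have := H1 p0; by rewrite /= p2map_pm.
Qed.

(* X : a -> c <- b *)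
Definition Xc : graph := @Graph (option bool) bool (fun e => Some e) (fun _ => None).
Definition Yc : graph := @Graph bool Empty_set (fun e => match e with end) (fun e => match e with end).

Definition cst (Z : graph) (E : edge Z -> Empty_set) : ghom Z Yc.
Proof.
refine (@GHom Z Yc (fun _ => true) (fun e => match E e with end) _ _);
  by move=> e; case: (E e).
Defined.

Definition bad : path2 (sym Xc).
Proof. by exists (inl true, inr false). Defined.

Definition isbad (w : path2 (sym Xc)) : bool :=
  ((sval w).1 == inl true) && ((sval w).2 == inr false).

Definition u2 (E : edge (fobj (fcomp G2 Fsym) Xc) -> Empty_set) :
  ghom (fobj (fcomp G2 Fsym) Xc) Yc.
Proof.
refine (@GHom (fobj (fcomp G2 Fsym) Xc) Yc (fun w : path2 (sym Xc) => ~~ isbad w) (fun e => match E e with end) _ _);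
  by move=> e; case: (E e).
Defined.

Lemma notGF : ~ Delta0_induced (fcomp G2 Fsym).
Proof.
move=> H.
have E : forall Z, edge (fobj (fcomp G2 Fsym) Z) -> Empty_set by move=> Z e; exact e.
have [u [_ Hu]] := H Xc Yc (fun n _ => cst (@E (lin n))) (fun m n f x => conj (fun _ => erefl) (fun e => match E _ e with end)).
have H1 := Hu (cst (@E Xc)).
have H2 := Hu (u2 (@E Xc)).
have [A1 _] := H1 (fun n x => conj (fun _ => erefl) (fun e => match E _ e with end)).
have [A2 _] : homeq (u2 (@E Xc)) u.
  apply: H2 => n x; split; last by move=> e; case: (E _ e).
  move=> w /=; apply/negP; rewrite /isbad /=.
  case: w => [[s1 s2] q] /=.
  case: s1 q => [i|i]; case: s2 => [j|j] q /andP [/eqP h1 /eqP h2] //.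
  case: h1 => h1; case: h2 => h2.
  have ij : i = j by apply: (@lift_inj _ ord0).
  by subst j; rewrite h1 in h2.
have := A1 bad; rewrite -A2 /=.
by [].
Qed.

Theorem corollary7p5 :
  ~ Delta0_saturated /\
  exists F G : endofunctor,
    Delta0_induced F /\ Delta0_induced G /\ ~ Delta0_induced (fcomp G F).
Proof.
split.
- move=> Hs; apply: notGF; apply: Hs; [exact: Fsym_induced | exact: G2_induced].
- exists Fsym, G2; split; [exact: Fsym_induced | split; [exact: G2_induced | exact: notGF]].
Qed.
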